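(* Let $Y\subset\mathbb C^n$ be a $k$-dimensional subspace and $a\in(\mathbb C^\times)^n$. Assume that for every $j\in\{1,\dots,n\}$, $Y$ is not contained in the hyperplane $\{q_j=0\}$ and $Y^\perp$ is not contained in the hyperplane $\{p_j=0\}$. Then $L_{Y,a}$ is an irreducible smooth $n$-dimensional Lagrangian subvariety of $\mathbb C^n\times\{p\in(\mathbb C^n)^*:\prod_{j=1}^np_j\ne0\}$, defined by the equations $$F_\alpha:=\sum_{j=1}^n\alpha_jp_j=0\ \ (\alpha\in Y),\qquad G_{\beta,a}:=\sum_{j=1}^n\beta_j(q_j-a_j/p_j)=0\ \ (\beta\in Y^\perp),$$ and the set of all functions $\{F_\alpha,G_{\beta,a}\}$ is in involution.
   Context: $\mathbb C^n$ has coordinates $q_1,\dots,q_n$, the dual space $(\mathbb C^n)^*$ has dual coordinates $p_1,\dots,p_n$, and $\mathbb C^n\times(\mathbb C^n)^*$ carries the symplectic form $\sum_jdp_j\wedge dq_j$. Two functions $M,N$ are in involution if $\sum_j(\partial M/\partial q_j\,\partial N/\partial p_j-\partial M/\partial p_j\,\partial N/\partial q_j)=0$. $Y^\perp\subset(\mathbb C^n)^*$ is the annihilator of $Y$. The rational symplectic map $r_a(q_1,\dots,q_n,p_1,\dots,p_n)=(q_1+a_1/p_1,\dots,q_n+a_n/p_n,p_1,\dots,p_n)$ is defined where all $p_j\ne0$, and $L_{Y,a}=r_a(Y\times Y^\perp)$ is the image under $r_a$ of the points of $Y\times Y^\perp$ with all $p_j\ne0$. *)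

(* Defs.v *)
From mathcomp Require Import all_boot all_order all_algebra.
From mathcomp Require Import all_classical all_reals all_analysis.
From mathcomp.real_closed Require Import complex.
Set Implicit Arguments. Unset Strict Implicit. Unset Printing Implicit Defensive.
Import Order.TTheory GRing.Theory Num.Theory.
Import numFieldNormedType.Exports.
Local Open Scope ring_scope.

(* A point (q, p) of C^n x (C^n)^*, with q, p row vectors of complex numbers. *)
Notation cplx R := (R[i]^o).
Notation pt R n := ('rV[cplx R]_n * 'rV[cplx R]_n)%type.

Definition pairing (R : realType) (n : nat) (x y : 'rV[cplx R]_n) : cplx R :=
  \sum_(j < n) x 0 j * y 0 j.

Definition perp (R : realType) (n : nat) (Y : {vspace 'rV[cplx R]_n})
    (b : 'rV[cplx R]_n) : Prop :=
  forall a, a \in Y -> pairing a b = 0.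

Definition Uopen (R : realType) (n : nat) (x : pt R n) : Prop :=
  \prod_(j < n) x.2 0 j != 0.

Definition r_map (R : realType) (n : nat) (a : 'rV[cplx R]_n) (x : pt R n)
    : pt R n :=
  (\row_j (x.1 0 j + a 0 j / x.2 0 j), x.2).

Definition L_Ya (R : realType) (n : nat) (Y : {vspace 'rV[cplx R]_n})
    (a : 'rV[cplx R]_n) (x : pt R n) : Prop :=
  exists y eta : 'rV[cplx R]_n,
    [/\ y \in Y, perp Y eta, (forall j, eta 0 j != 0) & x = r_map a (y, eta)].

Definition F_fun (R : realType) (n : nat) (al : 'rV[cplx R]_n) (x : pt R n)
    : cplx R := \sum_(j < n) al 0 j * x.2 0 j.
Definition G_fun (R : realType) (n : nat) (a be : 'rV[cplx R]_n) (x : pt R n)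
    : cplx R := \sum_(j < n) be 0 j * (x.1 0 j - a 0 j / x.2 0 j).

Definition dq (R : realType) (n : nat) (j : 'I_n) (H : pt R n -> cplx R)
    (x : pt R n) : cplx R :=
  'D_(delta_mx 0 j) (fun q : 'rV[cplx R]_n => (H (q, x.2) : cplx R)) x.1.
Definition dp (R : realType) (n : nat) (j : 'I_n) (H : pt R n -> cplx R)
    (x : pt R n) : cplx R :=
  'D_(delta_mx 0 j) (fun p : 'rV[cplx R]_n => (H (x.1, p) : cplx R)) x.2.

(* Poisson bracket for the symplectic form  sum_j dp_j /\ dq_j. *)
Definition poisson (R : realType) (n : nat) (M N : pt R n -> cplx R)
    (x : pt R n) : cplx R :=
  \sum_(j < n) (dq j M x * dp j N x - dp j M x * dq j N x).

Definition in_involution (R : realType) (n : nat)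
    (fam : (pt R n -> cplx R) -> Prop) : Prop :=
  forall M N, fam M -> fam N -> forall x, Uopen x -> poisson M N x = 0.

(* Regular functions on U = C^n x (C-{0})^n : the ring C[q, p, p^-1]. *)
Inductive regular (R : realType) (n : nat) : (pt R n -> cplx R) -> Prop :=
| reg_const (c : cplx R) : regular (fun x : pt R n => c)
| reg_q (j : 'I_n) : regular (fun x => x.1 0 j)
| reg_p (j : 'I_n) : regular (fun x => x.2 0 j)
| reg_pinv (j : 'I_n) : regular (fun x => (x.2 0 j)^-1)
| reg_add f g : regular f -> regular g -> regular (fun x => f x + g x)
| reg_mul f g : regular f -> regular g -> regular (fun x => f x * g x).

Definition dfun (R : realType) (n : nat) (H : pt R n -> cplx R) (x v : pt R n)
    : cplx R :=
  \sum_(j < n) (dq j H x * v.1 0 j + dp j H x * v.2 0 j).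

Definition dmx (R : realType) (n : nat) (H : pt R n -> cplx R) (x : pt R n)
    : 'rV[cplx R]_(n + n) :=
  row_mx (\row_j dq j H x) (\row_j dp j H x).

Definition zero_locus (R : realType) (n : nat) (S : (pt R n -> cplx R) -> Prop)
    (x : pt R n) : Prop :=
  Uopen x /\ forall f, S f -> f x = 0.

(* Irreducibility in the Zariski topology of U (closed sets = zero loci of
   families of regular functions). *)
Definition zariski_irreducible (R : realType) (n : nat) (L : pt R n -> Prop)
    : Prop :=
  (exists x, L x) /\
  forall S1 S2 : (pt R n -> cplx R) -> Prop,
    (forall f, S1 f -> regular f) -> (forall f, S2 f -> regular f) ->
    (forall x, L x -> zero_locus S1 x \/ zero_locus S2 x) ->
    (forall x, L x -> zero_locus S1 x) \/ (forall x, L x -> zero_locus S2 x).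

Definition smooth_of_dim (R : realType) (n d : nat) (L : pt R n -> Prop)
    : Prop :=
  forall x, L x ->
    exists g : 'I_(n + n - d) -> (pt R n -> cplx R),
      [/\ forall i, regular (g i),
          \rank (\matrix_i (dmx (g i) x : 'rV[cplx R]_(n + n))) = (n + n - d)%N
        & \forall y \near x, (L y <-> (Uopen y /\ forall i, g i y = 0))].

Definition tangent_space (R : realType) (n : nat) (L : pt R n -> Prop)
    (x v : pt R n) : Prop :=
  forall g, regular g -> (forall y, L y -> g y = 0) -> dfun g x v = 0.

Definition omega (R : realType) (n : nat) (v w : pt R n) : cplx R :=
  \sum_(j < n) (v.2 0 j * w.1 0 j - w.2 0 j * v.1 0 j).

Definition lagrangian_subvariety (R : realType) (n : nat) (L : pt R n -> Prop)
    : Prop :=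
  [/\ forall x, L x -> Uopen x,
      exists S : (pt R n -> cplx R) -> Prop,
        (forall f, S f -> regular f) /\ (forall x, L x <-> zero_locus S x),
      smooth_of_dim n L
    & forall x, L x -> forall v w, tangent_space L x v -> tangent_space L x w ->
        omega v w = 0].

(* Main.v *)
Require Import Defs.
From mathcomp Require Import all_boot all_order all_algebra.
From mathcomp Require Import all_classical all_reals all_analysis.
From mathcomp.real_closed Require Import complex.
From mathcomp Require Import ring.
Import Order.TTheory GRing.Theory Num.Theory.
Import numFieldNormedType.Exports.
Local Open Scope ring_scope.
Local Open Scope classical_set_scope.
Set Implicit Arguments. Unset Strict Implicit.

Section D.
Variable R : realType.
Local Notation C := (cplx R).

Lemma derive_eq n (f : 'rV[C]_n -> C) x v (g : C -> C) (c : C) :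
 (\forall h \near 0^', h^-1 *: (f (h *: v + x) - f x) = g h) ->
 g h @[h --> 0^'] --> c -> 'D_v f x = c.
Proof.
move=> Hn Hg; rewrite /derive; apply: cvg_lim => //.
apply: cvg_trans Hg; apply: near_eq_cvg; by apply: filterS Hn => h /= ->.
Qed.


Lemma shiftE n (p : 'rV[C]_n) j h i :
  (h *: delta_mx 0 j + p) 0 i = (if i == j then h + p 0 i else p 0 i).
Proof.
rewrite !mxE /=; case: (i == j); first by rewrite mulr1.
by rewrite mulr0 add0r.
Qed.

Lemma sum_shift n (c : 'I_n -> C -> C) (p : 'rV[C]_n) j h :
 \sum_i c i ((h *: delta_mx 0 j + p) 0 i) - \sum_i c i (p 0 i)
   = c j (h + p 0 j) - c j (p 0 j).
Proof.
rewrite -sumrB (bigD1 j) //= big1 ?addr0; first by rewrite shiftE eqxx.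
by move=> i /negbTE ij; rewrite shiftE ij subrr.
Qed.

Lemma dq_F n j (al : 'rV[C]_n) (x : pt R n) : dq j (F_fun al) x = 0.
Proof.
apply: (@derive_eq _ _ _ _ (fun=> 0)); last exact: cvg_cst.
by near=> h; rewrite /F_fun /= subrr scaler0.
Unshelve. all: by end_near.
Qed.

Lemma dp_F n j (al : 'rV[C]_n) (x : pt R n) : dp j (F_fun al) x = al 0 j.
Proof.
apply: (@derive_eq _ _ _ _ (fun=> al 0 j)); last exact: cvg_cst.
near=> h; rewrite /F_fun /=.
rewrite (sum_shift (fun i t => al 0 i * t)) -mulrBr addrK.
have hn0 : h != 0 by near: h; exact: nbhs_dnbhs_neq.
by rewrite /GRing.scale /= mulrCA mulVf // mulr1.
Unshelve. all: by end_near.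
Qed.

Lemma dq_G n j (a be : 'rV[C]_n) (x : pt R n) : dq j (G_fun a be) x = be 0 j.
Proof.
apply: (@derive_eq _ _ _ _ (fun=> be 0 j)); last exact: cvg_cst.
near=> h; rewrite /G_fun /=.
rewrite (sum_shift (fun i t => be 0 i * (t - a 0 i / x.2 0 i))) -mulrBr.
rewrite opprB addrA subrK addrK.
have hn0 : h != 0 by near: h; exact: nbhs_dnbhs_neq.
by rewrite /GRing.scale /= mulrCA mulVf // mulr1.
Unshelve. all: by end_near.
Qed.

Lemma dp_G n j (a be : 'rV[C]_n) (x : pt R n) : x.2 0 j != 0 ->
  dp j (G_fun a be) x = be 0 j * a 0 j / (x.2 0 j ^+ 2).
Proof.
move=> pn0.
apply: (@derive_eq _ _ _ _ (fun h => be 0 j * a 0 j / (x.2 0 j * (h + x.2 0 j)))).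
  near=> h; rewrite /G_fun /=.
  rewrite (sum_shift (fun i t => be 0 i * (x.1 0 i - a 0 i / t))) -mulrBr.
  have hn0 : h != 0 by near: h; exact: nbhs_dnbhs_neq.
  have hp0 : h + x.2 0 j != 0.
    near: h; apply: (@cvgr_neq0 _ _ _ _ _ (fun h => h + x.2 0 j) (0 + x.2 0 j)).
      apply: cvgD; last exact: cvg_cst.
      by apply: cvg_within_filter; exact: cvg_id.
    by rewrite add0r.
  rewrite /GRing.scale /=.
  field.
  by rewrite hp0 pn0 hn0.
apply: cvgM; first exact: cvg_cst.
rewrite expr2; apply: cvgV; first by rewrite mulf_neq0.
apply: cvgM; first exact: cvg_cst.
rewrite -{2}[x.2 0 j]add0r; apply: cvgD; last exact: cvg_cst.
by apply: cvg_within_filter; exact: cvg_id.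
Unshelve. all: by end_near.
Qed.

End D.

Section LinAlg.
Variable R : realType.
Local Notation C := (cplx R).
Variable n : nat.
Variable Y : {vspace 'rV[C]_n}.

Lemma pairingE (x y : 'rV[C]_n) : pairing x y = (x *m y^T) 0 0.
Proof. rewrite /pairing mxE; under [RHS]eq_bigr do rewrite mxE; by []. Qed.

Lemma pairingC (x y : 'rV[C]_n) : pairing x y = pairing y x.
Proof. by apply: eq_bigr => j _; rewrite mulrC. Qed.

Definition Amx : 'M[C]_(\dim Y, n) := \matrix_(i < \dim Y) (vbasis Y)`_i.

Lemma memY_sub y : y \in Y -> (y <= Amx)%MS.
Proof.
move=> /coord_vbasis ->; apply/submxP.
exists (\row_i coord (vbasis Y) i y); rewrite mulmx_sum_row.
by apply: eq_bigr => i _; rewrite rowK mxE.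
Qed.

Lemma sub_memY y : (y <= Amx)%MS -> y \in Y.
Proof.
case/submxP => u ->; rewrite mulmx_sum_row; apply: memv_suml => i _.
apply: memvZ; rewrite rowK; apply: vbasis_mem; apply: mem_nth.
by rewrite size_tuple.
Qed.

Lemma pairing_sub m (B : 'M[C]_(m, n)) p al :
  (forall i, pairing (row i B) p = 0) -> (al <= B)%MS -> pairing al p = 0.
Proof.
move=> H /submxP [u ->]; rewrite pairingE -mulmxA.
have -> : B *m p^T = 0.
  apply/matrixP => i j; rewrite ord1 [RHS]mxE -(H i) pairingE !mxE.
  by under [RHS]eq_bigr do rewrite mxE.
by rewrite mulmx0 mxE.
Qed.

Definition Kmx : 'M[C]_n := kermx Amx^T.

Lemma perp_ker b : perp Y b <-> (b <= Kmx)%MS.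
Proof.
rewrite /Kmx sub_kermx; split => [H|/eqP H].
  apply/eqP/matrixP => i j; rewrite ord1 [RHS]mxE.
  apply: etrans (H (row j Amx) _); last by apply: sub_memY; exact: row_sub.
  rewrite pairingC /pairing mxE; under eq_bigr do rewrite !mxE.
  by under [RHS]eq_bigr do rewrite !mxE.
move=> al /memY_sub; apply: pairing_sub => // i; rewrite pairingC.
apply: etrans (_ : (b *m Amx^T) 0 i = 0); last by rewrite H mxE.
rewrite /pairing mxE; under eq_bigr do rewrite !mxE.
by under [RHS]eq_bigr do rewrite !mxE.
Qed.

Lemma col_perp p (N : 'M[C]_(n, p)) j : Amx *m N = 0 -> perp Y (col j N)^T.
Proof.
move=> HN; apply/perp_ker; rewrite /Kmx sub_kermx; apply/eqP/matrixP => k l.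
rewrite ord1 [RHS]mxE.
apply: etrans (_ : (Amx *m N) l j = 0); last by rewrite HN mxE.
rewrite !mxE; under eq_bigr do rewrite !mxE.
by under [RHS]eq_bigr do rewrite mulrC mxE.
Qed.

Lemma double_perp y : (forall b, perp Y b -> pairing y b = 0) -> y \in Y.
Proof.
move=> H; apply: sub_memY; rewrite submxE; apply/eqP/matrixP => i j.
rewrite ord1 [RHS]mxE.
have Pb := col_perp j (mulmx_coker Amx).
move: (cokermx Amx) Pb => N Pb.
apply: etrans (H _ Pb); rewrite /pairing mxE.
by under [RHS]eq_bigr do rewrite !mxE.
Qed.

Lemma rank_sum : (\rank Amx + \rank Kmx)%N = n.
Proof.
by rewrite /Kmx mxrank_ker mxrank_tr subnKC // rank_leq_col.
Qed.

End LinAlg.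

Section Poly.
Variable K : numFieldType.

Lemma poly_nonroot (p : {poly K}) : p != 0 -> exists t, ~~ root p t.
Proof.
move=> p0; have [//|Hn] := pselect (exists t, ~~ root p t).
have H t : root p t.
  by case E: (root p t) => //; exfalso; apply: Hn; exists t; rewrite E.
have Hu : uniq [seq i%:R : K | i <- iota 0 (size p)].
  by rewrite map_inj_uniq ?iota_uniq // => x y /eqP; rewrite eqr_nat => /eqP.
have Ha : all (root p) [seq i%:R : K | i <- iota 0 (size p)].
  by apply/allP => t _; exact: H.
by have := max_poly_roots p0 Ha Hu; rewrite size_map size_iota ltnn.
Qed.

Lemma poly_zero_outside (p D : {poly K}) :
  D != 0 -> (forall t, D.[t] != 0 -> p.[t] = 0) -> p = 0.
Proof.
move=> D0 H; apply/eqP; apply: contraT => pn0.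
have [t] := poly_nonroot (mulf_neq0 pn0 D0).
rewrite rootE hornerM; have [Dt|Dt] := eqVneq D.[t] 0; first by rewrite Dt mulr0 eqxx.
by rewrite H // mul0r eqxx.
Qed.

Definition lin (c d : K) : {poly K} := c%:P + d *: 'X.

Lemma linE c d t : (lin c d).[t] = c + d * t.
Proof. by rewrite /lin hornerD hornerC hornerZ hornerX. Qed.

Lemma lin_neq0 c d : c != 0 -> lin c d != 0.
Proof.
move=> c0; apply: contraNneq c0 => H.
have := congr1 (fun p : {poly K} => p`_0) H.
by rewrite /lin coefD coefC coefZ coefX /= mulr0 addr0 coef0 => ->.
Qed.

Lemma lin_neq0' c d : d != 0 -> lin c d != 0.
Proof.
move=> d0; apply: contraNneq d0 => H.
have := congr1 (fun p : {poly K} => p`_1) H.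
by rewrite /lin coefD coefC coefZ coefX /= mulr1 add0r coef0 => ->.
Qed.

End Poly.

Section Reg.
Variable R : realType.
Local Notation C := (cplx R).
Variable n : nat.

Lemma regular_ext (f g : pt R n -> C) : regular f -> (forall x, f x = g x) -> regular g.
Proof. by move=> Hf H; have <- : f = g by apply: funext. Qed.

Lemma regular_sum (F : 'I_n -> pt R n -> C) :
  (forall j, regular (F j)) -> regular (fun x => \sum_j F j x).
Proof.
move=> HF.
suff H : forall s : seq 'I_n, regular (fun x => \sum_(j <- s) F j x) by exact: H.
elim=> [|j s IH].
  by apply: (regular_ext (reg_const _ 0)) => x; rewrite big_nil.
by apply: (regular_ext (reg_add (HF j) IH)) => x; rewrite big_cons.
Qed.

Lemma regular_F (al : 'rV[C]_n) : regular (F_fun al).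
Proof.
apply: regular_sum => j; exact: (reg_mul (reg_const _ _) (reg_p _ j)).
Qed.

Lemma regular_G (a be : 'rV[C]_n) : regular (G_fun a be).
Proof.
apply: regular_sum => j.
apply: (regular_ext (reg_mul (reg_const _ (be 0 j))
          (reg_add (reg_q _ j) (reg_mul (reg_const _ (- a 0 j)) (reg_pinv _ j))))).
by move=> x; rewrite mulNr.
Qed.

Variable a : 'rV[C]_n.
Variables y1 e1 y2 e2 : 'rV[C]_n.

Definition yl (t : C) := y1 + t *: (y2 - y1).
Definition el (t : C) := e1 + t *: (e2 - e1).
Definition ptl t := r_map a (yl t, el t).
Definition Ep j := lin (e1 0 j) (e2 0 j - e1 0 j).
Definition Yp j := lin (y1 0 j) (y2 0 j - y1 0 j).
Definition Dp := \prod_j Ep j.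

Lemma elE t j : el t 0 j = (Ep j).[t].
Proof. by rewrite /el /Ep linE !mxE mulrC. Qed.

Lemma ylE t j : yl t 0 j = (Yp j).[t].
Proof. by rewrite /yl /Yp linE !mxE mulrC. Qed.

Lemma DpE t : Dp.[t] = \prod_j (Ep j).[t].
Proof. by rewrite /Dp horner_prod. Qed.

Lemma Dp_split t j : Dp.[t] = (Ep j).[t] * (\prod_(i | i != j) Ep i).[t].
Proof. by rewrite DpE horner_prod (bigD1 j). Qed.

Lemma Dp_neq0 t j : Dp.[t] != 0 -> (Ep j).[t] != 0.
Proof. by rewrite DpE => /prodf_neq0; apply. Qed.

Lemma reg_poly f : regular f ->
  exists P N, forall t, Dp.[t] != 0 -> f (ptl t) * Dp.[t] ^+ N = P.[t].
Proof.
elim=> [c|j|j|j|g h _ [P1 [N1 H1]] _ [P2 [N2 H2]]|g h _ [P1 [N1 H1]] _ [P2 [N2 H2]]].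
- by exists c%:P, 0%N => t _; rewrite expr0 mulr1 hornerC.
- exists (Yp j * Dp + a 0 j *: \prod_(i | i != j) Ep i), 1%N => t Dt.
  have Et := Dp_neq0 j Dt.
  rewrite hornerD hornerM hornerZ expr1 (Dp_split t j) /ptl /r_map /= mxE ylE elE.
  by field.
- by exists (Ep j), 0%N => t _; rewrite expr0 mulr1 /ptl /= elE.
- exists (\prod_(i | i != j) Ep i), 1%N => t Dt.
  have Et := Dp_neq0 j Dt.
  rewrite expr1 (Dp_split t j) /ptl /= elE.
  by field.
- exists (P1 * Dp ^+ N2 + P2 * Dp ^+ N1), (N1 + N2)%N => t Dt.
  rewrite hornerD !hornerM !horner_exp -H1 // -H2 // exprD.
  by ring.
- exists (P1 * P2), (N1 + N2)%N => t Dt.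
  rewrite hornerM -H1 // -H2 // exprD.
  by ring.
Qed.

End Reg.

Section Main.
Variable R : realType.
Local Notation C := (cplx R).
Variable n : nat.
Variable Y : {vspace 'rV[C]_n}.
Variable a : 'rV[C]_n.

Definition zv (x : pt R n) : 'rV[C]_n := \row_j (x.1 0 j - a 0 j / x.2 0 j).

Lemma G_pairing be x : G_fun a be x = pairing be (zv x).
Proof. by rewrite /G_fun /pairing; under [RHS]eq_bigr do rewrite mxE. Qed.

Lemma F_pairing al (x : pt R n) : F_fun al x = pairing al x.2.
Proof. by []. Qed.

Lemma Uopen_nz (x : pt R n) j : Uopen x -> x.2 0 j != 0.
Proof. by move/prodf_neq0; apply. Qed.

Lemma L_char x : L_Ya Y a x <->
  [/\ Uopen x, (forall al, al \in Y -> F_fun al x = 0)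
     & (forall be, perp Y be -> G_fun a be x = 0)].
Proof.
split.
  case=> y [eta [yY Pe nz ->]]; split.
  - by apply/prodf_neq0 => j _.
  - by move=> al alY; rewrite F_pairing; exact: Pe.
  move=> be Pb; rewrite G_pairing.
  have -> : zv (r_map a (y, eta)) = y.
    by apply/matrixP => i j; rewrite ord1 !mxE addrK.
  by rewrite pairingC; exact: Pb.
case=> U HF HG; exists (zv x), x.2; split.
- by apply: double_perp => b Pb; rewrite pairingC -G_pairing; exact: HG.
- by move=> al alY; rewrite -F_pairing; exact: HF.
- by move=> j; exact: Uopen_nz.
case: x U HF HG => q p U HF HG; congr pair.
by apply/matrixP => i j; rewrite ord1 !mxE subrK.
Qed.

Definition fam (H : pt R n -> C) : Prop :=
  (exists2 al, al \in Y & H = F_fun al) \/ (exists2 be, perp Y be & H = G_fun a be).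

Lemma pois_FF (al al' : 'rV[C]_n) (x : pt R n) : poisson (F_fun al) (F_fun al') x = 0.
Proof. by apply: big1 => j _; rewrite !dq_F mul0r mulr0 subrr. Qed.

Lemma pois_FG (al be : 'rV[C]_n) (x : pt R n) : poisson (F_fun al) (G_fun a be) x = - pairing al be.
Proof.
rewrite /poisson /pairing -sumrN; apply: eq_bigr => j _.
by rewrite dq_F dp_F dq_G mul0r sub0r.
Qed.

Lemma pois_GF (al be : 'rV[C]_n) (x : pt R n) : poisson (G_fun a be) (F_fun al) x = pairing al be.
Proof.
rewrite /poisson /pairing; apply: eq_bigr => j _.
by rewrite dq_F dp_F dq_G mulr0 subr0 mulrC.
Qed.

Lemma pois_GG (be be' : 'rV[C]_n) (x : pt R n) : Uopen x -> poisson (G_fun a be) (G_fun a be') x = 0.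
Proof.
move=> U; apply: big1 => j _; rewrite !dq_G !dp_G ?Uopen_nz //.
by ring.
Qed.

Lemma invol : in_involution fam.
Proof.
move=> M N HM HN x U.
case: HM => [[al alY ->]|[be Pb ->]]; case: HN => [[al' al'Y ->]|[be' Pb' ->]].
- exact: pois_FF.
- by rewrite pois_FG (Pb' al alY) oppr0.
- by rewrite pois_GF (Pb al' al'Y).
- exact: pois_GG.
Qed.

Lemma perp0 : perp Y 0.
Proof. by apply/perp_ker; exact: sub0mx. Qed.

Lemma perpD b1 b2 : perp Y b1 -> perp Y b2 -> perp Y (b1 + b2).
Proof. by move=> /perp_ker H1 /perp_ker H2; apply/perp_ker; exact: addmx_sub. Qed.

Lemma perpZ (t : C) b : perp Y b -> perp Y (t *: b).
Proof. by move=> /perp_ker H1; apply/perp_ker; exact: scalemx_sub. Qed.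

Lemma perpB b1 b2 : perp Y b1 -> perp Y b2 -> perp Y (b1 - b2).
Proof. by move=> H1 H2; rewrite -scaleN1r; apply: perpD => //; exact: perpZ. Qed.

Hypothesis hperp : forall j : 'I_n, ~ (forall be, perp Y be -> be 0 j = 0).

Lemma gen_eta_aux m : (m <= n)%N ->
  exists eta, perp Y eta /\ forall j : 'I_n, (j < m)%N -> eta 0 j != 0.
Proof.
elim: m => [_|m IH mn]; first by exists 0; split => //; exact: perp0.
have [eta [Pe Hne]] := IH (ltnW mn).
pose jm : 'I_n := Ordinal mn.
have [be [Pb bj]] : exists be, perp Y be /\ be 0 jm != 0.
  case: (pselect (exists be, perp Y be /\ be 0 jm != 0)) => // Hn.
  exfalso; apply: (@hperp jm) => be Pb.
  by case: (eqVneq (be 0 jm) 0) => // bn; exfalso; apply: Hn; exists be.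
pose P := \prod_(j : 'I_n | (j < m.+1)%N) lin (eta 0 j) (be 0 j).
have P0 : P != 0.
  apply/prodf_neq0 => j; rewrite ltnS leq_eqVlt => /orP [/eqP jE|jm'].
    by apply: lin_neq0'; have -> : j = jm by apply: val_inj.
  by apply: lin_neq0; exact: Hne.
have [t Pt] := poly_nonroot P0.
exists (eta + t *: be); split; first by apply: perpD => //; exact: perpZ.
move=> j jm1; move: Pt; rewrite rootE /P horner_prod => /prodf_neq0 /(_ j jm1).
by rewrite linE !mxE mulrC.
Qed.

Lemma gen_eta : exists eta, perp Y eta /\ forall j : 'I_n, eta 0 j != 0.
Proof.
have [eta [Pe H]] := gen_eta_aux (leqnn n).
by exists eta; split => // j; apply: H.
Qed.

Lemma L_line y1 e1 y2 e2 t : y1 \in Y -> y2 \in Y -> perp Y e1 -> perp Y e2 ->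
  (Dp e1 e2).[t] != 0 -> L_Ya Y a (ptl a y1 e1 y2 e2 t).
Proof.
move=> H1 H2 P1 P2 Dt; exists (yl y1 y2 t), (el e1 e2 t); split => //.
- by apply: memvD => //; apply: memvZ; apply: memvB.
- by apply: perpD => //; apply: perpZ; apply: perpB.
by move=> j; rewrite elE; exact: Dp_neq0.
Qed.

Lemma witness S x : (forall f, S f -> regular f) -> L_Ya Y a x -> ~ zero_locus S x ->
  exists f, [/\ S f, regular f & f x != 0].
Proof.
move=> RS Lx nZ; case: (pselect (exists f, [/\ S f, regular f & f x != 0])) => // Hn.
exfalso; apply: nZ; split; first by case/L_char: Lx.
move=> f Sf; case: (eqVneq (f x) 0) => // fx; exfalso; apply: Hn; exists f; split => //.
exact: RS.
Qed.

Lemma irred : zariski_irreducible (L_Ya Y a).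
Proof.
split.
  have [eta [Pe He]] := gen_eta.
  by exists (r_map a (0, eta)), 0, eta; split => //; exact: mem0v.
move=> S1 S2 R1 R2 Hcov.
case: (pselect (forall x, L_Ya Y a x -> zero_locus S1 x)) => [h|h1]; [by left|].
case: (pselect (forall x, L_Ya Y a x -> zero_locus S2 x)) => [h|h2]; [by right|].
exfalso.
have [x1 [Lx1 nZ1]] : exists x, L_Ya Y a x /\ ~ zero_locus S1 x.
  case: (pselect (exists x, L_Ya Y a x /\ ~ zero_locus S1 x)) => // Hn.
  exfalso; apply: h1 => x Lx; case: (pselect (zero_locus S1 x)) => // nz.
  by exfalso; apply: Hn; exists x.
have [x2 [Lx2 nZ2]] : exists x, L_Ya Y a x /\ ~ zero_locus S2 x.
  case: (pselect (exists x, L_Ya Y a x /\ ~ zero_locus S2 x)) => // Hn.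
  exfalso; apply: h2 => x Lx; case: (pselect (zero_locus S2 x)) => // nz.
  by exfalso; apply: Hn; exists x.
have [f1 [S1f Rf1 f1x]] := witness R1 Lx1 nZ1.
have [f2 [S2f Rf2 f2x]] := witness R2 Lx2 nZ2.
case: Lx1 => y1 [e1 [Y1 P1 N1 Ex1]].
case: Lx2 => y2 [e2 [Y2 P2 N2 Ex2]].
have [Q1 [M1 HQ1]] := reg_poly a y1 e1 y2 e2 Rf1.
have [Q2 [M2 HQ2]] := reg_poly a y1 e1 y2 e2 Rf2.
have D0 : (Dp e1 e2).[0] != 0.
  by rewrite DpE; apply/prodf_neq0 => j _; rewrite linE mulr0 addr0.
have D1 : (Dp e1 e2).[1] != 0.
  by rewrite DpE; apply/prodf_neq0 => j _; rewrite linE mulr1 addrC subrK.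
have pt0 : ptl a y1 e1 y2 e2 0 = x1.
  by rewrite Ex1 /ptl /yl /el !scale0r !addr0.
have pt1 : ptl a y1 e1 y2 e2 1 = x2.
  by rewrite Ex2 /ptl /yl /el !scale1r !(addrC y1) !(addrC e1) !subrK.
have Dnz : Dp e1 e2 != 0 by apply: contraNneq D0 => ->; rewrite horner0.
have := poly_zero_outside (p := Q1 * Q2) Dnz.
have Hz : forall t, (Dp e1 e2).[t] != 0 -> (Q1 * Q2).[t] = 0.
  move=> t Dt; rewrite hornerM -HQ1 // -HQ2 //.
  case: (Hcov _ (L_line Y1 Y2 P1 P2 Dt)) => [[_ Z]|[_ Z]].
    by rewrite (Z _ S1f) !mul0r.
  by rewrite (Z _ S2f) mul0r mulr0.
move=> /(_ Hz) /eqP; rewrite mulf_eq0 => /orP [/eqP Q10|/eqP Q20].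
  have := HQ1 0 D0; rewrite Q10 horner0 pt0 => /eqP.
  by rewrite mulf_eq0 (negbTE f1x) expf_eq0 (negbTE D0) andbF.
have := HQ2 1 D1; rewrite Q20 horner0 pt1 => /eqP.
by rewrite mulf_eq0 (negbTE f2x) expf_eq0 (negbTE D1) andbF.
Qed.

Lemma L_closed : exists S : (pt R n -> C) -> Prop,
  (forall f, S f -> regular f) /\ (forall x, L_Ya Y a x <-> zero_locus S x).
Proof.
exists fam; split.
  by move=> f [[al _ ->]|[be _ ->]]; [exact: regular_F|exact: regular_G].
move=> x; rewrite L_char; split.
  case=> U HF HG; split => // f [[al alY ->]|[be Pb ->]]; [exact: HF|exact: HG].
by case=> U H; split => // [al alY|be Pb]; apply: H; [left|right]; [exists al|exists be].
Qed.

Definition wv (x v : pt R n) : 'rV[C]_n :=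
  \row_j (v.1 0 j + a 0 j / x.2 0 j ^+ 2 * v.2 0 j).

Lemma dfun_F al (x v : pt R n) : dfun (F_fun al) x v = pairing al v.2.
Proof. by apply: eq_bigr => j _; rewrite dq_F dp_F mul0r add0r. Qed.

Lemma dfun_G be (x v : pt R n) : Uopen x -> dfun (G_fun a be) x v = pairing be (wv x v).
Proof.
move=> U; rewrite /dfun /pairing; under [RHS]eq_bigr do rewrite mxE.
apply: eq_bigr => j _; rewrite dq_G dp_G ?Uopen_nz //.
by ring.
Qed.

Lemma tangent_props x v : L_Ya Y a x -> tangent_space (L_Ya Y a) x v ->
  perp Y v.2 /\ wv x v \in Y.
Proof.
move=> Lx T; have [U _ _] := (L_char x).1 Lx; split.
  move=> al alY; rewrite -(dfun_F al x); apply: T; first exact: regular_F.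
  by move=> y /L_char [_ HF _]; exact: HF.
apply: double_perp => b Pb; rewrite pairingC -(dfun_G _ _ U); apply: T.
  exact: regular_G.
by move=> y /L_char [_ _ HG]; exact: HG.
Qed.

Lemma isotropic x : L_Ya Y a x -> forall v w, tangent_space (L_Ya Y a) x v ->
  tangent_space (L_Ya Y a) x w -> omega v w = 0.
Proof.
move=> Lx v w Tv Tw.
have [Pv Yv] := tangent_props Lx Tv; have [Pw Yw] := tangent_props Lx Tw.
apply: etrans (_ : pairing (wv x w) v.2 - pairing (wv x v) w.2 = 0).
  rewrite /omega /pairing -sumrB; apply: eq_bigr => j _; rewrite !mxE.
  by ring.
by rewrite (Pv _ Yw) (Pw _ Yv) subrr.
Qed.

Definition A0 := row_base (Amx Y).
Definition B0 := row_base (Kmx Y).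
Definition rA := \rank (Amx Y).
Definition rK := \rank (Kmx Y).

Lemma eN : (n + n - n)%N = (rA + rK)%N.
Proof. by rewrite addnK rank_sum. Qed.

Definition gfun (i : 'I_(n + n - n)) : pt R n -> C :=
  match fintype.split (cast_ord eN i) with
  | inl i1 => F_fun (row i1 A0)
  | inr i2 => G_fun a (row i2 B0)
  end.

Lemma rowA0_Y i1 : row i1 A0 \in Y.
Proof. apply: sub_memY; apply: submx_trans (row_sub _ _) _; rewrite eq_row_base //. Qed.

Lemma rowB0_perp i2 : perp Y (row i2 B0).
Proof. apply/perp_ker; apply: submx_trans (row_sub _ _) _; rewrite eq_row_base //. Qed.

Lemma gfun_l i1 : gfun (cast_ord (esym eN) (lshift rK i1)) = F_fun (row i1 A0).
Proof. by rewrite /gfun cast_ordKV (unsplitK (inl i1 : 'I_rA + 'I_rK)). Qed.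

Lemma gfun_r i2 : gfun (cast_ord (esym eN) (rshift rA i2)) = G_fun a (row i2 B0).
Proof. by rewrite /gfun cast_ordKV (unsplitK (inr i2 : 'I_rA + 'I_rK)). Qed.

Lemma L_g y : L_Ya Y a y <-> (Uopen y /\ forall i, gfun i y = 0).
Proof.
rewrite L_char; split.
  case=> U HF HG; split => // i; rewrite /gfun.
  by case: (fintype.split _) => [i1|i2]; [apply: HF; exact: rowA0_Y|apply: HG; exact: rowB0_perp].
case=> U H; split => //.
  move=> al /memY_sub alA; rewrite F_pairing; apply: (pairing_sub (B := A0)).
    by move=> i1; rewrite -F_pairing -gfun_l; exact: H.
  by rewrite eq_row_base.
move=> be /perp_ker beK; rewrite G_pairing; apply: (pairing_sub (B := B0)).
  by move=> i2; rewrite -G_pairing -gfun_r; exact: H.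
by rewrite eq_row_base.
Qed.

Lemma dmx_F al (x : pt R n) : dmx (F_fun al) x = row_mx 0 al.
Proof.
rewrite /dmx; congr row_mx; apply/matrixP => i j; rewrite ord1 !mxE.
  by rewrite dq_F.
by rewrite dp_F.
Qed.

Definition Dg (x : pt R n) : 'M[C]_n := diag_mx (\row_j (a 0 j / x.2 0 j ^+ 2)).

Lemma dmx_G be (x : pt R n) : Uopen x -> dmx (G_fun a be) x = row_mx be (be *m Dg x).
Proof.
move=> U; rewrite /dmx /Dg mul_mx_diag; congr row_mx; apply/matrixP => i j; rewrite ord1 !mxE.
  by rewrite dq_G.
by rewrite dp_G ?Uopen_nz // mulrA.
Qed.

Definition Mb (x : pt R n) : 'M[C]_(rA + rK, n + n) :=
  col_mx (row_mx 0 A0) (row_mx B0 (B0 *m Dg x)).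

Lemma row_Mb (x : pt R n) k : Uopen x ->
  row k (Mb x) = dmx (gfun (cast_ord (esym eN) k)) x.
Proof.
move=> U; rewrite -[k](splitK k); case: (fintype.split k) => [i1|i2] /=.
  by rewrite gfun_l dmx_F /Mb rowKu row_row_mx row0.
rewrite gfun_r (dmx_G _ U) /Mb rowKd row_row_mx; congr row_mx; exact: row_mul.
Qed.

Lemma rank_g (x : pt R n) : Uopen x ->
  \rank (\matrix_i (dmx (gfun i) x : 'rV[C]_(n + n))) = (n + n - n)%N.
Proof.
move=> U; apply/eqP; apply: inj_row_free => v Hv.
pose w : 'rV[C]_(rA + rK) := \row_k v 0 (cast_ord (esym eN) k).
have Hw : w *m Mb x = 0.
  rewrite -Hv !mulmx_sum_row (reindex (cast_ord (esym eN))).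
    by apply: eq_bigr => k _; rewrite rowK row_Mb // mxE.
  by apply: onW_bij; exists (cast_ord eN); [exact: cast_ordKV|exact: cast_ordK].
move: Hw; rewrite -[w]hsubmxK /Mb mul_row_col !mul_mx_row mulmx0 add_row_mx add0r.
rewrite -(row_mx0 _ 1 n n) => /eq_row_mx [H2 H1].
have u2 : rsubmx w = 0.
  by apply: (row_free_inj (row_base_free (Kmx Y))); rewrite /= H2 mul0mx.
move: H1; rewrite u2 !mul0mx addr0 => H1.
have u1 : lsubmx w = 0.
  by apply: (row_free_inj (row_base_free (Amx Y))); rewrite /= H1 mul0mx.
have w0 : w = 0 by rewrite -[w]hsubmxK u1 u2 row_mx0.
apply/matrixP => i j; rewrite ord1 [RHS]mxE.
have := congr1 (fun M : 'rV[C]_(rA + rK) => M 0 (cast_ord eN j)) w0.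
by rewrite !mxE cast_ordK.
Qed.

Lemma smooth : smooth_of_dim n (L_Ya Y a).
Proof.
move=> x Lx; have [U _ _] := (L_char x).1 Lx.
exists gfun; split.
- move=> i; rewrite /gfun; case: (fintype.split _) => ?; [exact: regular_F|exact: regular_G].
- exact: rank_g.
near=> y; exact: L_g.
Unshelve. all: by end_near.
Qed.

End Main.

Theorem lemma4p1 (R : realType) (n k : nat) (Y : {vspace 'rV[cplx R]_n})
    (a : 'rV[cplx R]_n) :
  \dim Y = k ->
  (forall j : 'I_n, a 0 j != 0) ->
  (forall j : 'I_n, ~ (forall al, al \in Y -> al 0 j = 0)) ->
  (forall j : 'I_n, ~ (forall be, perp Y be -> be 0 j = 0)) ->
  [/\ zariski_irreducible (L_Ya Y a),
      lagrangian_subvariety (L_Ya Y a),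
      (forall x, L_Ya Y a x <->
         [/\ Uopen x,
             (forall al, al \in Y -> F_fun al x = 0)
           & (forall be, perp Y be -> G_fun a be x = 0)])
    & in_involution (fun H => (exists2 al, al \in Y & H = F_fun al) \/
                              (exists2 be, perp Y be & H = G_fun a be))].
Proof.
move=> _ _ _ hperp; split.
- exact: (@irred R n Y a hperp).
- split.
  + by move=> x /L_char [].
  + exact: L_closed.
  + exact: smooth.
  + exact: isotropic.
- exact: L_char.
- exact: invol.
Qed.
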